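(* Let $\mathcal{D}=(D,B,\mu)$ be a blueprint. For any two threshold functions $t_1,t_2:B\to[-1,1]$, $$|\mathsf{Soundness}(\mathcal{D},t_1)-\mathsf{Soundness}(\mathcal{D},t_2)|\le\sum_{b\in B}|t_1(b)-t_2(b)|.$$
   Context: $\Phi$ is the standard normal CDF. For $\rho\in[-1,1]$, $\Gamma_\rho(q_1,q_2)=\Pr[x\le\Phi^{-1}(q_1),\,y\le\Phi^{-1}(q_2)]$ for jointly Gaussian standard normals $x,y$ with correlation $\rho$. A configuration is $\theta=(b_i,b_j,b_{ij})\in[-1,1]^3$ with $-1+|b_i+b_j|\le b_{ij}\le1-|b_i-b_j|$. Its relative pairwise bias is $\rho(\theta)=\frac{b_{ij}-b_ib_j}{\sqrt{(1-b_i^2)(1-b_j^2)}}$ (or $0$ if the denominator is $0$). A blueprint $\mathcal{D}=(D,B,\mu)$: $D$ a finitely supported distribution on configurations, $B$ the set of biases (first two coordinates) appearing in its support, $\mu$ a probability measure on $B$ with $\sum_b\mu(b)b=0$. For a threshold function $t:B\to[-1,1]$, $\mathsf{Soundness}(\mathcal{D},t)=\mathbb{E}_{\theta=(b_i,b_j,b_{ij})\sim D}[\frac{1-t(b_i)}{2}+\frac{1-t(b_j)}{2}-2\Gamma_{\rho(\theta)}(\frac{1-t(b_i)}{2},\frac{1-t(b_j)}{2})]$. *)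

(* Defs.v *)
From HB Require Import structures.
From mathcomp Require Import all_boot all_order all_algebra.
From mathcomp Require Import all_classical all_reals all_analysis.
Set Implicit Arguments. Unset Strict Implicit. Unset Printing Implicit Defensive.
Import Order.TTheory GRing.Theory Num.Theory.
Local Open Scope classical_set_scope.
Local Open Scope ring_scope.

Section Defs.
Context {R : realType}.

Definition Phi (x : R) : R := fine (normal_prob 0 1 `]-oo, x]).

(* quantile function Phi^{-1} : [0,1] -> extended reals;
   Phi^{-1}(0) = -oo, Phi^{-1}(1) = +oo, true inverse on (0,1) *)
Definition PhiInv (q : R) : \bar R := ereal_inf [set x%:E | x in [set x | q <= Phi x]].

(* Gamma_rho(q1,q2) = Pr[x <= Phi^{-1} q1, y <= Phi^{-1} q2] where
   (x, y) = (g1, rho g1 + sqrt(1-rho^2) g2), g1 g2 iid N(0,1):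
   the standard jointly Gaussian pair with correlation rho. *)
Definition Gamma (rho q1 q2 : R) : R :=
  fine ((normal_prob 0 1 \x normal_prob 0 1)%E
    [set g : R * R | (g.1%:E <= PhiInv q1)%E /\
       ((rho * g.1 + Num.sqrt (1 - rho ^+ 2) * g.2)%:E <= PhiInv q2)%E]).

Definition config := (R * R * R)%type.
Definition bi (th : config) : R := th.1.1.
Definition bj (th : config) : R := th.1.2.
Definition bij (th : config) : R := th.2.

Definition is_config (th : config) : Prop :=
  [/\ -1 <= bi th <= 1, -1 <= bj th <= 1, -1 <= bij th <= 1,
      -1 + `|bi th + bj th| <= bij th & bij th <= 1 - `|bi th - bj th|].

Definition rel_bias (th : config) : R :=
  let d := Num.sqrt ((1 - bi th ^+ 2) * (1 - bj th ^+ 2)) in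
  if d == 0 then 0 else (bij th - bi th * bj th) / d.

Definition is_fin_distr (supp : seq config) (w : config -> R) : Prop :=
  [/\ uniq supp, (forall th, th \in supp -> 0 < w th)
    & \sum_(th <- supp) w th = 1].

Definition biases (supp : seq config) : seq R :=
  undup (flatten [seq [:: bi th; bj th] | th <- supp]).

Definition is_blueprint (supp : seq config) (w : config -> R) (mu : R -> R) : Prop :=
  [/\ is_fin_distr supp w,
      (forall th, th \in supp -> is_config th),
      (forall b, b \in biases supp -> 0 <= mu b),
      \sum_(b <- biases supp) mu b = 1
    & \sum_(b <- biases supp) mu b * b = 0].

Definition is_threshold (supp : seq config) (t : R -> R) : Prop :=
  forall b, b \in biases supp -> -1 <= t b <= 1.

Definition Soundness (supp : seq config) (w : config -> R) (t : R -> R) : R :=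
  \sum_(th <- supp) w th *
    (let q1 := (1 - t (bi th)) / 2 in let q2 := (1 - t (bj th)) / 2 in
     q1 + q2 - 2 * Gamma (rel_bias th) q1 q2).

End Defs.

(* Main.v *)
Require Import Defs.
From mathcomp Require Import all_boot all_order all_algebra.
From mathcomp Require Import all_classical all_reals all_analysis.
From mathcomp Require Import measurable_realfun.
From mathcomp Require Import ring lra.
Import numFieldNormedType.Exports.
Import Order.TTheory GRing.Theory Num.Theory.
Local Open Scope ring_scope.
Local Open Scope classical_set_scope.
Set Implicit Arguments. Unset Strict Implicit. Unset Printing Implicit Defensive.

Section N.
Context {R : realType}.
Local Notation mu := (@lebesgue_measure R).
Local Notation N := (@normal_prob R 0 1).
Local Open Scope ereal_scope.

Lemma integral_N (f : R -> \bar R) : measurable_fun [set: R] f ->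
  (\int[N]_x `|f x| < +oo) ->
  \int[N]_x f x = \int[mu]_x (f x * (normal_pdf 0 1 x)%:E).
Proof.
move=> mf finf.
rewrite -(Radon_Nikodym_change_of_variables (normal_prob_dominates 0 1))//=; last first.
  by apply/integrableP; split.
apply: ae_eq_integral => //.
- apply: emeasurable_funM => //; apply: (measurable_int mu).
  apply: (integrableS _ _ (@subsetT _ _)) => //=.
  by apply: Radon_Nikodym_integrable; exact: normal_prob_dominates.
- apply: emeasurable_funM => //=; apply/measurableT_comp => //=.
  by apply/measurable_funTS; exact: measurable_normal_pdf.
- apply: ae_eqe_mul2l => /=.
  rewrite Radon_NikodymE//=; first exact: normal_prob_dominates.
  move=> abmu.
  case: cid => /= h [h1 h2 h3].
  apply: integral_ae_eq => //=.
  + by apply/measurableT_comp =>//; exact: measurable_normal_pdf.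
  + by move=> E _ mE; rewrite -h3.
Qed.

Local Open Scope ring_scope.
Lemma normal_pdf_affine (m s x : R) : 0 < s ->
  normal_pdf 0 1 ((x - m) / s) * s^-1 = normal_pdf m s x.
Proof.
move=> s0.
rewrite /normal_pdf (negbTE (lt0r_neq0 s0)) oner_eq0 /normal_peak /normal_fun.
rewrite mulrAC; congr (_ * _).
  rewrite expr1n mul1r.
  rewrite -[s ^+ 2 * pi *+ 2]mulrnAr sqrtrM ?sqr_ge0// sqrtr_sqr gtr0_norm//.
  by rewrite invfM mulrC.
congr expR; rewrite subr0 expr1n; field.
by rewrite (lt0r_neq0 s0).
Qed.

Lemma normal_shift (m s b : R) : 0 < s ->
  normal_prob m s `]-oo, b] = N `]-oo, (b - m) / s].
Proof.
move=> s0.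
pose F (x : R) := (x - m) / s.
have F'E : F^`()%classic = cst s^-1.
  apply/funext => x; rewrite /F derive1E deriveM// deriveD// derive_cst scaler0.
  by rewrite add0r derive_id derive_cst addr0 scaler1.
rewrite /normal_prob (_ : (b - m) / s = F b) //.
rewrite (@increasing_ge0_integration_by_substitutionNy _ F (normal_pdf 0 1) b) //.
- apply: eq_integral => x _; congr EFin.
  by rewrite F'E /= -normal_pdf_affine.
- move=> x y _ _ xy; rewrite /F ltr_pM2r ?invr_gt0// ltrBlDr subrK //.
- by rewrite F'E => x _; exact: cvg_cst.
- by rewrite F'E; exact: is_cvg_cst.
- by rewrite F'E; exact: cvg_cst.
- split.
  + move=> x _. rewrite /F. by [].
  + have HF : F x @[x --> b] --> F b.
      rewrite /F; apply: cvgM; last exact: cvg_cst.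
      by apply: cvgB; [exact: cvg_id | exact: cvg_cst].
    exact: cvg_at_left_filter HF.
- apply/gt0_cvgMlNy; last exact: cvg_addrr_Ny.
  by rewrite invr_gt0.
- apply: continuous_subspaceT; exact: continuous_normal_pdf.
- by move=> x _; exact: normal_pdf_ge0.
Qed.

Lemma normal_pdf_center (m s u : R) : s != 0 ->
  normal_pdf m s u = normal_pdf 0 s (u - m).
Proof. by move=> s0; rewrite /normal_pdf (negbTE s0) /normal_fun subr0. Qed.

Lemma normal_pdf_swap (rho s x u : R) : 0 < s -> rho ^+ 2 + s ^+ 2 = 1 ->
  normal_pdf (rho * x) s u * normal_pdf 0 1 x =
  normal_pdf (rho * u) s x * normal_pdf 0 1 u.
Proof.
move=> s0 hs.
rewrite /normal_pdf (negbTE (lt0r_neq0 s0)) oner_eq0 /normal_fun.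
rewrite mulrACA [RHS]mulrACA -!expRD; congr (_ * expR _).
have s2 : s ^+ 2 = 1 - rho ^+ 2 by rewrite -hs addrC addKr.
have s2n : 1 - rho ^+ 2 != 0 by rewrite -s2 sqrf_eq0 (lt0r_neq0 s0).
rewrite s2; field.
by rewrite s2n.
Qed.

Lemma normal_sym (a : R) : N `[a, +oo[ = N `]-oo, - a].
Proof.
rewrite /normal_prob ge0_integration_by_substitutionNy.
- apply: eq_integral => x _; congr EFin.
  by rewrite /= /normal_pdf oner_eq0 /normal_fun !subr0 sqrrN.
- apply: continuous_subspaceT; exact: continuous_normal_pdf.
- by move=> x _; exact: normal_pdf_ge0.
Qed.

Lemma mkcond_indic (D : set R) (g : R -> R) :
  (\int[mu]_(u in D) (g u)%:E = \int[mu]_u (\1_D u * g u)%:E)%E.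
Proof.
rewrite integral_mkcond; apply: eq_integral => u _.
rewrite patchE indicE; case: ifP => _; by rewrite ?mul1r ?mul0r.
Qed.

Lemma gauss_rot (rho s b : R) : 0 < s -> rho ^+ 2 + s ^+ 2 = 1 ->
  (N \x N)%E [set g : R * R | rho * g.1 + s * g.2 <= b] = N `]-oo, b].
Proof.
move=> s0 hs.
set T := [set g : R * R | _].
have mf : measurable_fun setT (fun g : R * R => rho * g.1 + s * g.2).
  apply: measurable_funD.
    by apply: measurable_funM => //; exact: measurable_fst.
  by apply: measurable_funM => //; exact: measurable_snd.
have mT : measurable T.
  have -> : T = setT `&` (fun g => rho * g.1 + s * g.2) @^-1` `]-oo, b].
    by apply/seteqP; split=> g /=; rewrite in_itv/= => //; case.
  by apply: mf.
have hsec x : xsection T x = `]-oo, (b - rho * x) / s]%classic.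
  apply/seteqP; split => u; rewrite /xsection /= inE /= in_itv /=.
    by move=> h; rewrite ler_pdivlMr //; move: h; rewrite /T /=; nra.
  by rewrite ler_pdivlMr // /T /= => h; nra.
rewrite /product_measure1 /=.
rewrite integral_N; last 2 first.
- exact: measurable_fun_xsection.
- apply: (@le_lt_trans _ _ (\int[N]_x (cst 1%E x))%E).
    apply: ge0_le_integral => //=.
    + apply: measurableT_comp => //; exact: measurable_fun_xsection.
    + move=> x _; rewrite gee0_abs //; apply: probability_le1.
      exact: measurable_xsection.
  by rewrite integral_cst //= mul1e probability_setT ltry.
under eq_integral => x _ do rewrite hsec -(@normal_shift (rho * x) s b s0) /normal_prob mkcond_indic.
pose f (g : R * R) := ((\1_(`]-oo, b]) g.2 * normal_pdf (rho * g.1) s g.2) * normal_pdf 0 1 g.1)%:E.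
have mf2 : measurable_fun setT f.
  apply/measurable_EFinP; apply: measurable_funM; first apply: measurable_funM.
  - apply: measurableT_comp; first exact: measurable_indic.
    exact: measurable_snd.
  - rewrite (_ : (fun g : R * R => _) = (fun g : R * R => normal_pdf 0 s (g.2 - rho * g.1))).
      apply: measurableT_comp; first exact: measurable_normal_pdf.
      apply: measurable_funB; first exact: measurable_snd.
      by apply: measurable_funM => //; exact: measurable_fst.
    by apply/funext => g; rewrite normal_pdf_center // lt0r_neq0.
  - apply: measurableT_comp; first exact: measurable_normal_pdf.
    exact: measurable_fst.

have f0 g : (0 <= f g)%E.
  by rewrite lee_fin !mulr_ge0 ?normal_pdf_ge0.
transitivity (\int[mu]_x \int[mu]_u f (x, u))%E.
  apply: eq_integral => x _.
  rewrite -ge0_integralZr //.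
  - apply/measurable_EFinP; apply: measurable_funM.
      exact: measurable_indic.
    exact: measurable_normal_pdf.
  - by move=> u _; rewrite lee_fin mulr_ge0 ?normal_pdf_ge0 ?indic_ge0.
  - by rewrite lee_fin normal_pdf_ge0.

rewrite (@fubini_tonelli _ _ _ _ _ mu mu f mf2 f0) /=.
rewrite /normal_prob mkcond_indic.
apply: eq_integral => u _.
transitivity (\int[mu]_x ((\1_(`]-oo, b]) u * normal_pdf 0 1 u)%:E * (normal_pdf (rho * u) s x)%:E))%E.
  apply: eq_integral => x _; rewrite /f /= -EFinM; congr EFin.
  by rewrite -mulrA normal_pdf_swap // (mulrC (normal_pdf (rho * u) s x)) mulrA.
rewrite ge0_integralZl //.
- by rewrite integral_normal_pdf mule1.
- apply/measurable_EFinP; exact: measurable_normal_pdf.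
- by move=> x _; rewrite lee_fin normal_pdf_ge0.
- by rewrite lee_fin mulr_ge0 ?normal_pdf_ge0.
Qed.

Lemma NEfin (A : set R) : measurable A -> N A = (fine (N A))%:E.
Proof.
move=> mA; rewrite fineK // ge0_fin_numE //.
by apply: (le_lt_trans (probability_le1 N mA)); rewrite ltry.
Qed.

Lemma Phi_E (x : R) : N `]-oo, x] = (Phi x)%:E.
Proof. by rewrite /Phi -NEfin. Qed.

Lemma Phi_ge0 (x : R) : 0 <= Phi x.
Proof. by rewrite -lee_fin -Phi_E. Qed.

Lemma Phi_le1 (x : R) : Phi x <= 1.
Proof. by rewrite -lee_fin -Phi_E probability_le1. Qed.

Lemma Phi_mono (x y : R) : x <= y -> Phi x <= Phi y.
Proof.
move=> xy; rewrite -lee_fin -!Phi_E; apply: le_measure; rewrite ?inE//.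
by move=> z; rewrite /= !in_itv /= => h; exact: le_trans h xy.
Qed.

Definition K : R := normal_peak 1.

Lemma N_oc_le (x y : R) : x <= y -> (N `]x, y] <= (K * (y - x))%:E)%E.
Proof.
move=> xy; rewrite /normal_prob.
apply: (@le_trans _ _ (\int[mu]_(z in `]x, y]) (cst K%:E z))%E).
  apply: ge0_le_integral => //.
  - by move=> z _; rewrite lee_fin normal_pdf_ge0.
  - apply/measurable_funTS/measurable_EFinP; exact: measurable_normal_pdf.
  - by move=> z _; rewrite lee_fin /K normal_pdf_ub // oner_eq0.
rewrite integral_cst //= lebesgue_measure_itv /= lte_fin.
case: ltP => h; first by rewrite -EFinD -EFinM.
have -> : y = x by apply/eqP; rewrite eq_le h xy.
by rewrite subrr mulr0 mule0.
Qed.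

Lemma Phi_lip (x y : R) : x <= y -> Phi y - Phi x <= K * (y - x).
Proof.
move=> xy.
have hU : N `]-oo, y] = (N `]-oo, x] + N `]x, y])%E.
  rewrite -measureU //.
    congr (N _); apply/seteqP; split => z /=; rewrite !in_itv /=.
      by move=> zy; case: (leP z x) => zx; [left|right; apply/andP; split].
    by case => [zx|/andP[]//]; exact: le_trans zx xy.
  apply/seteqP; split => z //=; rewrite !in_itv /= => -[zx /andP[xz _]].
  by move: (lt_le_trans xz zx); rewrite ltxx.
have := N_oc_le xy.
rewrite (NEfin (A := `]x, y]%classic)) // lee_fin => h.
move: hU; rewrite !Phi_E (NEfin (A := `]x, y]%classic)) // -EFinD => -[->].
by rewrite addrAC subrr add0r.
Qed.


Lemma N_setT : N [set: R] = 1%E.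
Proof. by rewrite /normal_prob integral_normal_pdf. Qed.

Lemma Phi_big (q : R) : q < 1 -> exists x : R, q < Phi x.
Proof.
move=> q1; apply/not_existsP => hn.
pose F (n : nat) := `]-oo, n%:R]%classic : set R.
have ndF : nondecreasing_seq F.
  by move=> n m nm; apply/subsetPset => z; rewrite /F /= !in_itv /= => h; apply: (le_trans h); rewrite ler_nat.
have cv := @nondecreasing_cvg_mu _ _ _ N F (fun _ => measurable_itv _)
  (bigcupT_measurable _ (fun _ => measurable_itv _)) ndF.
have UF : \bigcup_n F n = setT.
  apply/seteqP; split => // z _.
  exists (Num.Def.trunc z).+1 => //=; rewrite /F /= in_itv /=.
  exact/ltW/truncnS_gt.
have e1 : N (\bigcup_n F n) = 1%E by rewrite UF; exact: N_setT.
have {}cv : (N \o F) n @[n --> \oo] --> 1%E by rewrite -e1; exact: cv.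
have : (lim ((N \o F) n @[n --> \oo]) <= q%:E)%E.
  apply: lime_le; first by apply/cvg_ex; exists 1%E.
  apply: nearW => n; rewrite /= /F Phi_E lee_fin.
  by move: (hn n%:R) => /negP; rewrite -leNgt.
by rewrite (cvg_lim _ cv) // lee_fin leNgt q1.
Qed.

Lemma Phi_small (q : R) : 0 < q -> exists x : R, Phi x < q.
Proof.
move=> q0; apply/not_existsP => hn.
pose F (n : nat) := `]-oo, - n%:R]%classic : set R.
have niF : nonincreasing_seq F.
  move=> n m nm; apply/subsetPset => z; rewrite /F /= !in_itv /= => h.
  by apply: (le_trans h); rewrite lerN2 ler_nat.
have F0 : (N (F 0%N) < +oo)%E.
  by apply: (le_lt_trans (probability_le1 N (measurable_itv _))); rewrite ltry.
have cv := @nonincreasing_cvg_mu _ _ _ N F F0 (fun _ => measurable_itv _)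
  (bigcapT_measurable (fun _ => measurable_itv _)) niF.
have UF : \bigcap_n F n = set0.
  apply/seteqP; split => // z /=.
  move=> /(_ (Num.Def.trunc (- z)).+1 I); rewrite /F /= in_itv /= => h.
  have := truncnS_gt (- z); rewrite ltrNl => h2.
  by move: (le_lt_trans h h2); rewrite ltxx.
have e1 : N (\bigcap_n F n) = 0%E by rewrite UF measure0.
have {}cv : (N \o F) n @[n --> \oo] --> 0%E by rewrite -e1; exact: cv.
have : (q%:E <= lim ((N \o F) n @[n --> \oo]))%E.
  apply: lime_ge; first by apply/cvg_ex; exists 0%E.
  apply: nearW => n; rewrite /= /F Phi_E lee_fin.
  by move: (hn (- n%:R)) => /negP; rewrite -leNgt.
by rewrite (cvg_lim _ cv) // lee_fin leNgt q0.
Qed.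

Lemma K_gt0 : 0 < K.
Proof. by rewrite /K normal_peak_gt0 // oner_eq0. Qed.

Lemma quantile (q : R) : 0 <= q <= 1 ->
  N [set x : R | (x%:E <= PhiInv q)%E] = q%:E.
Proof.
move=> /andP[q0 q1].
rewrite /PhiInv.
set S := [set x : R | q <= Phi x].
set I := [set x%:E | x in S].
have [S0|/set0P [x0 Sx0]] := eqVneq S set0.
  have -> : I = set0 by rewrite /I S0 image_set0.
  rewrite ereal_inf0.
  have -> : [set x : R | (x%:E <= +oo)%E] = [set: R].
    by apply/seteqP; split => x //= _; exact: leey.
  have -> : q = 1.
    apply/eqP; rewrite eq_le q1 /= leNgt; apply/negP => /Phi_big [x qx].
    have Sx : S x by rewrite /S /= ltW.
    by move: Sx; rewrite S0.
  exact: N_setT.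
have infx0 : (ereal_inf I <= x0%:E)%E by apply: ereal_inf_lbound; exists x0.
have [q00|qpos] := eqVneq q 0.
  have infNy : ereal_inf I = -oo%E.
    move: infx0; case E: (ereal_inf I) => [r| |] // _.
    have : (ereal_inf I <= (r - 1)%:E)%E.
      by apply: ereal_inf_lbound; exists (r - 1) => //; rewrite /S /= q00 Phi_ge0.
    by rewrite E lee_fin => h; exfalso; clear -h; lra.
  rewrite infNy q00.
  have -> : [set x : R | (x%:E <= -oo)%E] = set0.
    by apply/seteqP; split => x //=; rewrite leeNy_eq.
  exact: measure0.
have qp : 0 < q by rewrite lt_neqAle eq_sym qpos q0.
have [m Pm] := Phi_small qp.
have lbm x : S x -> m < x.
  move=> Sx; rewrite ltNge; apply/negP => xm.
  by move: (le_lt_trans (Phi_mono xm) Pm); rewrite ltNge Sx.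
have minf : (m%:E <= ereal_inf I)%E.
  by apply: le_ereal_inf_tmp => _ [x Sx <-]; rewrite lee_fin ltW // lbm.
set c := fine (ereal_inf I).
have cE : ereal_inf I = c%:E.
  rewrite /c fineK //; apply/fin_numPlt/andP; split.
    by apply: (lt_le_trans _ minf); exact: ltNyr.
  by apply: (le_lt_trans infx0); exact: ltry.
rewrite cE.
have -> : [set x : R | (x%:E <= c%:E)%E] = `]-oo, c]%classic.
  by apply/seteqP; split => x /=; rewrite in_itv /= lee_fin.
rewrite Phi_E; congr EFin.
have clb x : S x -> c <= x.
  by move=> Sx; rewrite -lee_fin -cE; apply: ereal_inf_lbound; exists x.
apply/eqP; rewrite eq_le; apply/andP; split.
  apply/ler_addgt0Pr => e e0.
  set d := e / K.
  have d0 : 0 < d by rewrite divr_gt0 // K_gt0.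
  have Kd : K * d = e by rewrite /d mulrC divfK // lt0r_neq0 // K_gt0.
  have cSn : ~ S (c - d) by move=> Sx; have := clb _ Sx; clear -d0; lra.
  have h1 : Phi (c - d) < q by rewrite ltNge; apply/negP.
  have h2 := @Phi_lip (c - d) c (ltac:(clear -d0; lra)).
  have e3 : c - (c - d) = d by clear; lra.
  rewrite e3 Kd in h2.
  clear -h1 h2; lra.
apply/ler_addgt0Pr => e e0.
set d := e / K.
have d0 : 0 < d by rewrite divr_gt0 // K_gt0.
have Kd : K * d = e by rewrite /d mulrC divfK // lt0r_neq0 // K_gt0.
have [y Iy yc] := @lb_ereal_inf_adherent _ I _ d0 (ltac:(by rewrite cE)).
case: Iy yc => x Sx <- yc.
rewrite cE -EFinD lte_fin in yc.
have h2 := Phi_lip (clb _ Sx).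
have h3 : K * (x - c) <= K * d by rewrite ler_pM2l ?K_gt0 //; clear -yc; lra.
rewrite Kd in h3; move: Sx; rewrite /S /= => Sx.
clear -Sx h2 h3; lra.
Qed.



Local Notation P := (N \x N)%E.

Lemma mle (a : \bar R) : measurable [set x : R | (x%:E <= a)%E].
Proof.
case: a => [r| |].
- have -> : [set x : R | (x%:E <= r%:E)%E] = `]-oo, r]%classic.
    by apply/seteqP; split => x /=; rewrite in_itv /= lee_fin.
  exact: measurable_itv.
- have -> : [set x : R | (x%:E <= +oo)%E] = setT.
    by apply/seteqP; split => x //= _; exact: leey.
  exact: measurableT.
- have -> : [set x : R | (x%:E <= -oo)%E] = set0.
    by apply/seteqP; split => x //=; rewrite leeNy_eq.
  exact: measurable0.
Qed.

Lemma P_setX (A B : set R) : measurable A -> measurable B ->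
  P (A `*` B) = (N A * N B)%E.
Proof. by move=> mA mB; rewrite product_measure1E. Qed.

Lemma P_fst (a : \bar R) :
  P [set g : R * R | (g.1%:E <= a)%E] = N [set x : R | (x%:E <= a)%E].
Proof.
have -> : [set g : R * R | (g.1%:E <= a)%E] = [set x : R | (x%:E <= a)%E] `*` setT.
  by apply/seteqP; split => g /=; [move=> h; split|case].
rewrite P_setX //; last exact: mle.
by rewrite N_setT mule1.
Qed.

Lemma P_setT : P setT = 1%E.
Proof. by rewrite -setXTT P_setX // N_setT mule1. Qed.

Lemma P_snd (rho : R) (a : \bar R) : -1 <= rho <= 1 ->
  P [set g : R * R | ((rho * g.1 + Num.sqrt (1 - rho ^+ 2) * g.2)%:E <= a)%E]
  = N [set x : R | (x%:E <= a)%E].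
Proof.
move=> /andP[r1 r2].
case: a => [b| |]; last 2 first.
- have -> : [set x : R | (x%:E <= +oo)%E] = setT.
    by apply/seteqP; split => x //= _; exact: leey.
  rewrite N_setT -P_setT; congr (P _).
  by apply/seteqP; split => x //= _; exact: leey.
- have -> : [set x : R | (x%:E <= -oo)%E] = set0.
    by apply/seteqP; split => x //=; rewrite leeNy_eq.
  rewrite measure0.
  have -> : [set g : R * R | ((rho * g.1 + Num.sqrt (1 - rho ^+ 2) * g.2)%:E <= -oo)%E] = set0.
    by apply/seteqP; split => x //=; rewrite leeNy_eq.
  exact: measure0.
have -> : [set x : R | (x%:E <= b%:E)%E] = `]-oo, b]%classic.
  by apply/seteqP; split => x /=; rewrite in_itv /= lee_fin.
have [r2e|r2ne] := eqVneq (rho ^+ 2) 1.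
  rewrite r2e subrr sqrtr0.
  have : (rho == 1) || (rho == -1) by rewrite -sqrf_eq1 r2e.
  case/orP => /eqP ->.
    have -> : [set g : R * R | ((1 * g.1 + 0 * g.2)%:E <= b%:E)%E] = `]-oo, b]%classic `*` setT.
      apply/seteqP; split => g /=; rewrite in_itv /= mul1r mul0r addr0 lee_fin.
        by move=> h; split.
      by case.
    by rewrite P_setX // N_setT mule1.
  have -> : [set g : R * R | ((-1 * g.1 + 0 * g.2)%:E <= b%:E)%E] = `[- b, +oo[%classic `*` setT.
    apply/seteqP; split => g /=; rewrite in_itv /= andbT mulN1r mul0r addr0 lee_fin lerNl.
      by move=> h; split.
    by case.
  by rewrite P_setX // N_setT mule1 normal_sym opprK.
have r2le : rho ^+ 2 <= 1 by nra.
have s0 : 0 < Num.sqrt (1 - rho ^+ 2).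
  by rewrite sqrtr_gt0 subr_gt0 lt_neqAle r2ne r2le.
have hs : rho ^+ 2 + Num.sqrt (1 - rho ^+ 2) ^+ 2 = 1.
  by rewrite sqr_sqrtr ?subr_ge0 // addrC subrK.
rewrite -(@gauss_rot rho _ b s0 hs); congr (P _).
Qed.

Lemma PhiInv_mono (q q' : R) : q <= q' -> (PhiInv q <= PhiInv q')%E.
Proof.
move=> qq'; rewrite /PhiInv; apply: ereal_inf_le_tmp => _ [x Sx <-].
by exists x => //; rewrite /= (le_trans qq' Sx).
Qed.

Definition X1 (q : R) := [set g : R * R | (g.1%:E <= PhiInv q)%E].
Definition X2 (rho q : R) :=
  [set g : R * R | ((rho * g.1 + Num.sqrt (1 - rho ^+ 2) * g.2)%:E <= PhiInv q)%E].

Lemma mX1 (q : R) : measurable (X1 q).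
Proof.
have -> : X1 q = setT `&` fst @^-1` [set x : R | (x%:E <= PhiInv q)%E].
  by rewrite setTI.
by apply: measurable_fst => //; exact: mle.
Qed.

Lemma mX2 (rho q : R) : measurable (X2 rho q).
Proof.
have mf : measurable_fun setT (fun g : R * R => rho * g.1 + Num.sqrt (1 - rho ^+ 2) * g.2).
  apply: measurable_funD.
    by apply: measurable_funM => //; exact: measurable_fst.
  by apply: measurable_funM => //; exact: measurable_snd.
have -> : X2 rho q = setT `&` (fun g : R * R => rho * g.1 + Num.sqrt (1 - rho ^+ 2) * g.2) @^-1` [set x : R | (x%:E <= PhiInv q)%E].
  by rewrite setTI.
by apply: mf => //; exact: mle.
Qed.

Lemma Pfin (X : set (R * R)) : measurable X -> P X \is a fin_num.
Proof.
move=> mX; rewrite ge0_fin_numE //.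
apply: (@le_lt_trans _ _ 1%E); last exact: ltry.
rewrite -P_setT; apply: le_measure; rewrite ?inE //.
Qed.




Lemma diff_bound d (T : measurableType d) (Q : set T -> \bar R)
  (hfin : forall X, measurable X -> Q X \is a fin_num)
  (h0 : forall X, measurable X -> (0 <= Q X)%E)
  (hD : forall X Y, measurable X -> measurable Y -> Q X = (Q (X `\` Y) + Q (X `&` Y))%E)
  (hle : forall X Y, measurable X -> measurable Y -> X `<=` Y -> (Q X <= Q Y)%E)
  (A A' B : set T) :
  measurable A -> measurable A' -> measurable B -> A `<=` A' ->
  fine (Q (A `&` B)) <= fine (Q (A' `&` B)) /\
  fine (Q (A' `&` B)) - fine (Q (A `&` B)) <= fine (Q A') - fine (Q A).
Proof.
move=> mA mA' mB AA'.
have F X : measurable X -> Q X = (fine (Q X))%:E.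
  by move=> mX; rewrite fineK // hfin.
have e1 := hD _ _ (measurableI _ _ mA' mB) mA.
have e2 := hD _ _ mA' mA.
have i1 : (A' `&` B) `&` A = A `&` B.
  by apply/seteqP; split => x /=; [case=> -[]|case=> xA xB; split; [split; [exact: AA'|]|]].
have i2 : A' `&` A = A.
  by apply/seteqP; split => x /=; [case|move=> xA; split; [exact: AA'|]].
rewrite i1 in e1; rewrite i2 in e2.
have m1 : measurable ((A' `&` B) `\` A) by apply: measurableD => //; exact: measurableI.
have m2 : measurable (A' `\` A) by exact: measurableD.
have le : fine (Q ((A' `&` B) `\` A)) <= fine (Q (A' `\` A)).
  rewrite -lee_fin -F // -F //; apply: hle => //.
  by move=> x /= [[]].
have g0 : 0 <= fine (Q ((A' `&` B) `\` A)) by rewrite -lee_fin -F // h0.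
have e1' : fine (Q (A' `&` B)) = fine (Q ((A' `&` B) `\` A)) + fine (Q (A `&` B)).
  by rewrite e1 fineD // hfin //; exact: measurableI.
have e2' : fine (Q A') = fine (Q (A' `\` A)) + fine (Q A).
  by rewrite e2 fineD // hfin.
rewrite e1' e2'; split; first by clear -g0; lra.
by clear -le; lra.
Qed.
End N.

Section M.
Context {R : realType}.
Local Notation mu := (@lebesgue_measure R).
Local Notation N := (@normal_prob R 0 1).
Local Notation P := (N \x N)%E.

Lemma eqsub_le (a b c e : R) : a = c -> b = e -> a - b <= c - e.
Proof. by move=> -> ->. Qed.

Lemma Pstuff_hD (X Y : set (R * R)) : measurable X -> measurable Y -> P X = (P (X `\` Y) + P (X `&` Y))%E.
Proof. by move=> mX mY; apply: measureDI. Qed.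

Lemma Pstuff_hle (X Y : set (R * R)) : measurable X -> measurable Y -> X `<=` Y -> (P X <= P Y)%E.
Proof. by move=> mX mY XY; apply: le_measure; rewrite ?inE. Qed.

Lemma Pstuff_h0 (X : set (R * R)) : measurable X -> (0 <= P X)%E.
Proof. by []. Qed.

Lemma GammaE (rho q1 q2 : R) : Gamma rho q1 q2 = fine (P (X1 q1 `&` X2 rho q2)).
Proof. by []. Qed.

Lemma PX1 (q : R) : 0 <= q <= 1 -> fine (P (X1 q)) = q.
Proof. by move=> hq; rewrite /X1 P_fst quantile. Qed.

Lemma PX2 (rho q : R) : -1 <= rho <= 1 -> 0 <= q <= 1 -> fine (P (X2 rho q)) = q.
Proof. by move=> hr hq; rewrite /X2 P_snd // quantile. Qed.

Lemma Gamma_step1 (rho q1 q1' q2 : R) : q1 <= q1' -> 0 <= q1 <= 1 -> 0 <= q1' <= 1 ->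
  Gamma rho q1 q2 <= Gamma rho q1' q2 /\
  Gamma rho q1' q2 - Gamma rho q1 q2 <= q1' - q1.
Proof.
move=> qq h1 h1'.
have sub : X1 q1 `<=` X1 q1'.
  by move=> g; rewrite /X1 /= => h; apply: (le_trans h); exact: PhiInv_mono.
case: (diff_bound Pfin Pstuff_h0 Pstuff_hD Pstuff_hle (mX1 q1) (mX1 q1') (mX2 rho q2) sub) => H1 H2.
rewrite (GammaE rho q1 q2) (GammaE rho q1' q2); split => //.
apply: (le_trans H2).
exact: (eqsub_le (PX1 h1') (PX1 h1)).
Qed.

Lemma Gamma_step2 (rho q1 q2 q2' : R) : -1 <= rho <= 1 -> q2 <= q2' ->
  0 <= q2 <= 1 -> 0 <= q2' <= 1 ->
  Gamma rho q1 q2 <= Gamma rho q1 q2' /\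
  Gamma rho q1 q2' - Gamma rho q1 q2 <= q2' - q2.
Proof.
move=> hr qq h2 h2'.
have sub : X2 rho q2 `<=` X2 rho q2'.
  by move=> g; rewrite /X2 /= => h; apply: (le_trans h); exact: PhiInv_mono.
case: (diff_bound Pfin Pstuff_h0 Pstuff_hD Pstuff_hle (mX2 rho q2) (mX2 rho q2') (mX1 q1) sub) => H1 H2.
rewrite (GammaE rho q1 q2) (GammaE rho q1 q2') (setIC (X1 q1) (X2 rho q2)) (setIC (X1 q1) (X2 rho q2')); split => //.
apply: (le_trans H2).
exact: (eqsub_le (PX2 hr h2') (PX2 hr h2)).
Qed.

Definition Fv (rho q1 q2 : R) := q1 + q2 - 2 * Gamma rho q1 q2.

Lemma real1 (q1 q1' q2 G G' : R) : q1 <= q1' -> G <= G' -> G' - G <= q1' - q1 ->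
  `|(q1 + q2 - 2 * G) - (q1' + q2 - 2 * G')| <= `|q1 - q1'|.
Proof.
move=> h1 h2 h3; rewrite (ler0_norm (x := q1 - q1')) ?subr_le0 //.
by rewrite ler_norml; apply/andP; split; lra.
Qed.

Lemma real1' (q1 q1' q2 G G' : R) : q1' <= q1 -> G' <= G -> G - G' <= q1 - q1' ->
  `|(q1 + q2 - 2 * G) - (q1' + q2 - 2 * G')| <= `|q1 - q1'|.
Proof.
move=> h1 h2 h3; rewrite (ger0_norm (x := q1 - q1')) ?subr_ge0 //.
by rewrite ler_norml; apply/andP; split; lra.
Qed.

Lemma real2 (q1 q2 q2' G G' : R) : q2 <= q2' -> G <= G' -> G' - G <= q2' - q2 ->
  `|(q1 + q2 - 2 * G) - (q1 + q2' - 2 * G')| <= `|q2 - q2'|.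
Proof.
move=> h1 h2 h3; rewrite (ler0_norm (x := q2 - q2')) ?subr_le0 //.
by rewrite ler_norml; apply/andP; split; lra.
Qed.

Lemma real2' (q1 q2 q2' G G' : R) : q2' <= q2 -> G' <= G -> G - G' <= q2 - q2' ->
  `|(q1 + q2 - 2 * G) - (q1 + q2' - 2 * G')| <= `|q2 - q2'|.
Proof.
move=> h1 h2 h3; rewrite (ger0_norm (x := q2 - q2')) ?subr_ge0 //.
by rewrite ler_norml; apply/andP; split; lra.
Qed.

Lemma Fv_step1 (rho q1 q1' q2 : R) : 0 <= q1 <= 1 -> 0 <= q1' <= 1 ->
  `|Fv rho q1 q2 - Fv rho q1' q2| <= `|q1 - q1'|.
Proof.
move=> h1 h1'; rewrite /Fv.
case: (leP q1 q1') => h.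
  case: (Gamma_step1 rho q2 h h1 h1') => H1 H2.
  exact: (@real1 q1 q1' q2 _ _ h H1 H2).
case: (Gamma_step1 rho q2 (ltW h) h1' h1) => H1 H2.
exact: (@real1' q1 q1' q2 _ _ (ltW h) H1 H2).
Qed.

Lemma Fv_step2 (rho q1 q2 q2' : R) : -1 <= rho <= 1 -> 0 <= q2 <= 1 -> 0 <= q2' <= 1 ->
  `|Fv rho q1 q2 - Fv rho q1 q2'| <= `|q2 - q2'|.
Proof.
move=> hr h2 h2'; rewrite /Fv.
case: (leP q2 q2') => h.
  case: (Gamma_step2 q1 hr h h2 h2') => H1 H2.
  exact: (@real2 q1 q2 q2' _ _ h H1 H2).
case: (Gamma_step2 q1 hr (ltW h) h2' h2) => H1 H2.
exact: (@real2' q1 q2 q2' _ _ (ltW h) H1 H2).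
Qed.

Lemma Fv_lip (rho q1 q2 q1' q2' : R) : -1 <= rho <= 1 ->
  0 <= q1 <= 1 -> 0 <= q1' <= 1 -> 0 <= q2 <= 1 -> 0 <= q2' <= 1 ->
  `|Fv rho q1 q2 - Fv rho q1' q2'| <= `|q1 - q1'| + `|q2 - q2'|.
Proof.
move=> hr h1 h1' h2 h2'.
apply: le_trans (ler_distD (Fv rho q1' q2) _ _) _.
by apply: lerD; [exact: Fv_step1|exact: Fv_step2].
Qed.
End M.

Section C.
Context {R : realType}.

Lemma corr_bound (a b c : R) : -1 + `|a + b| <= c -> c <= 1 - `|a - b| ->
  Num.sqrt ((1 - a ^+ 2) * (1 - b ^+ 2)) != 0 ->
  -1 <= (c - a * b) / Num.sqrt ((1 - a ^+ 2) * (1 - b ^+ 2)) <= 1.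
Proof.
move=> hl hu dn0.
have h1 : a + b <= `|a + b| := ler_norm _.
have h2 : - (a + b) <= `|a + b| by rewrite -normrN ler_norm.
have h3 : a - b <= `|a - b| := ler_norm _.
have h4 : - (a - b) <= `|a - b| by rewrite -normrN ler_norm.
have u1 : 0 <= 1 + c - a - b by lra.
have u2 : 0 <= 1 + c + a + b by lra.
have u3 : 0 <= 1 - c - a + b by lra.
have u4 : 0 <= 1 - c + a - b by lra.
have T1 : 0 <= (1 + c - a - b) * (1 + c + a + b) * ((1 - c - a + b) + (1 - c + a - b)).
  by rewrite !mulr_ge0 // addr_ge0.
have T2 : 0 <= (1 - c - a + b) * (1 - c + a - b) * ((1 + c - a - b) + (1 + c + a + b)).
  by rewrite !mulr_ge0 // addr_ge0.
have E : (c - a * b) ^+ 2 <= (1 - a ^+ 2) * (1 - b ^+ 2) by nra.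
have p0 : 0 <= (1 - a ^+ 2) * (1 - b ^+ 2) by apply: le_trans E; exact: sqr_ge0.
have d0 : 0 < Num.sqrt ((1 - a ^+ 2) * (1 - b ^+ 2)).
  by rewrite lt_neqAle eq_sym dn0 sqrtr_ge0.
have nd : `|c - a * b| <= Num.sqrt ((1 - a ^+ 2) * (1 - b ^+ 2)).
  by rewrite -sqrtr_sqr ler_sqrt.
by rewrite -ler_norml normrM normfV (gtr0_norm d0) ler_pdivrMr // mul1r.
Qed.

Lemma rel_bias_bound (th : @config R) : is_config th -> -1 <= rel_bias th <= 1.
Proof.
case=> _ _ _ hl hu.
rewrite /rel_bias; case: ifPn => [_|dn0]; first by rewrite lerN10 ler01.
exact: corr_bound.
Qed.
End C.

Lemma half_bound (R : realType) (x1 x2 y1 y2 M : R) : `|x1 - x2| <= M -> `|y1 - y2| <= M ->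
  `|(1 - x1) / 2 - (1 - x2) / 2| + `|(1 - y1) / 2 - (1 - y2) / 2| <= M.
Proof.
move=> hx hy.
have e1 : (1 - x1) / 2 - (1 - x2) / 2 = (x2 - x1) * 2^-1 by field.
have e2 : (1 - y1) / 2 - (1 - y2) / 2 = (y2 - y1) * 2^-1 by field.
rewrite e1 e2 !normrM (ger0_norm (x := 2^-1)) ?invr_ge0 ?ler0n //.
rewrite (distrC x2) (distrC y2).
lra.
Qed.

Lemma thr01 (R : realType) (t : R -> R) (b : R) : -1 <= t b <= 1 -> 0 <= (1 - t b) / 2 <= 1.
Proof. by case/andP => h1 h2; apply/andP; split; lra. Qed.

Local Close Scope classical_set_scope.
Local Open Scope ring_scope.
Unset Implicit Arguments.
Set Strict Implicit.

Theorem lemma2p15 (R : realType) (supp : seq (@config R)) (w : @config R -> R)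
  (mu : R -> R) (t1 t2 : R -> R) :
  is_blueprint supp w mu ->
  is_threshold supp t1 -> is_threshold supp t2 ->
  `|Soundness supp w t1 - Soundness supp w t2|
    <= \sum_(b <- biases supp) `|t1 b - t2 b|.
Proof.
case=> [[_ w0 w1] hcfg _ _ _] ht1 ht2.
set M := \sum_(b <- biases supp) `|t1 b - t2 b|.
have inB th : th \in supp -> (bi th \in biases supp) && (bj th \in biases supp).
  move=> hth; rewrite /biases !mem_undup; apply/andP; split; apply/flattenP;
    exists [:: bi th; bj th]; rewrite ?inE ?eqxx ?orbT //;
    by apply/mapP; exists th.
have leM b : b \in biases supp -> `|t1 b - t2 b| <= M.
  move=> hb; rewrite /M (bigD1_seq b) //= ?undup_uniq //.
  by rewrite lerDl sumr_ge0.
rewrite /Soundness -sumrB.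
apply: le_trans (ler_norm_sum _ _ _) _.
apply: (@le_trans _ _ (\sum_(th <- supp) w th * M)); last first.
  by rewrite -big_distrl /= w1 mul1r.
rewrite big_seq [X in _ <= X]big_seq; apply: ler_sum => th hth.
rewrite -mulrBr normrM (ger0_norm (ltW (w0 _ hth))).
apply: ler_wpM2l; first exact: ltW (w0 _ hth).
have /andP[hbi hbj] := inB _ hth.
apply: le_trans (Fv_lip (rel_bias_bound (hcfg _ hth)) (thr01 (ht1 _ hbi)) (thr01 (ht2 _ hbi)) (thr01 (ht1 _ hbj)) (thr01 (ht2 _ hbj))) _.
exact: half_bound (leM _ hbi) (leM _ hbj).
Qed.
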